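(* Let $T$ be a triangulation of the oriented 2-sphere (a simplicial complex), $z:\mathcal V(T)\to\mathbb C$ injective with no degenerate face. For every vertex $v$ and edge $e$, $$\frac{\partial\theta_e}{\partial z_v}=\frac{\mathrm i}2\sum_{e'\in\mathcal E(T)}A_{v,e'}E_{e',e},\qquad \frac{\partial\theta_e}{\partial\bar z_v}=-\frac{\mathrm i}2\sum_{e'\in\mathcal E(T)}\bar A_{v,e'}E_{e',e}.$$
   Context: Faces are written $(a,b,c)$ in positive cyclic order for the orientation. For an edge $e=\{a,b\}$ with adjacent faces $(a,b,c)$ and $(b,a,d)$, $\theta_e=\pi-\mathrm{Arg}\frac{z_b-z_c}{z_a-z_c}-\mathrm{Arg}\frac{z_a-z_d}{z_b-z_d}$ (local continuous branch; for a Delaunay triangulation with counterclockwise faces this is $\pi$ minus the sum of the two angles opposite $e$). $A_{v,e}=\frac1{z_v-z_{v'}}$ if $e=\{v,v'\}$, and $0$ if $v\notin e$; $\bar A$ is its complex conjugate. $E_{e,e'}$: for $e\neq e'$ in a common face with edges $\{a,b\},\{b,c\},\{c,a\}$ in positive cyclic order, $E_{e,e'}=-1$ if $e'$ immediately follows $e$ and $+1$ if $e'$ immediately precedes $e$; otherwise $0$. Derivatives are Wirtinger derivatives. *)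

(* Defs.v *)
From HB Require Import structures.
From mathcomp Require Import all_boot all_order all_algebra.
From mathcomp Require Import all_classical all_reals all_analysis.
From mathcomp Require Import complex.
Set Implicit Arguments. Unset Strict Implicit. Unset Printing Implicit Defensive.
Import Order.TTheory GRing.Theory Num.Theory.
Local Open Scope ring_scope.

(* A triangulation on a finite vertex type V is given by its positively
   oriented faces: [face a b c] holds iff (a,b,c) is a face listed in positive
   cyclic order (so [face] is closed under cyclic rotation). *)

Definition adj (V : finType) (face : V -> V -> V -> bool) (a b : V) : bool :=
  [exists c, face a b c].

Definition third (V : finType) (face : V -> V -> V -> bool) (a b : V) : V :=
  odflt a [pick c | face a b c].

(* Triangulation of the oriented 2-sphere (combinatorial encoding):
   faces are non-degenerate simplices, rotation-invariant, a 2-simplex is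
   determined by its vertex set (no face with both orientations), every
   directed edge lies in exactly one positive face and each edge has the
   opposite orientation in its other face (closed oriented pseudo-surface),
   the link of every vertex is a single (non-empty) cycle (closed surface),
   the complex is connected and its Euler characteristic is 2 (sphere). *)
Definition sphere_triangulation (V : finType) (face : V -> V -> V -> bool) : Prop :=
  (forall a b c, face a b c -> [&& a != b, b != c & a != c]) /\
  (forall a b c, face a b c -> face b c a) /\
  (forall a b c, face a b c -> ~~ face b a c) /\
  (forall a b c c', face a b c -> face a b c' -> c = c') /\
  (forall a b, adj face a b -> adj face b a) /\
  (forall v : V, (exists u, adj face v u) /\
         forall u w, adj face v u -> adj face v w ->
           exists k : nat, iter k (third face v) u = w) /\
  (forall x y : V, connect (adj face) x y) /\
      (#|V| + #|[set t : V * V * V | face t.1.1 t.1.2 t.2]| %/ 3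
        = 2 + #|[set p : V * V | adj face p.1 p.2]| %/ 2)%N.

Definition is_edge (V : finType) (face : V -> V -> V -> bool) (e : {set V}) : bool :=
  [exists p : V * V, adj face p.1 p.2 && (e == [set p.1; p.2])].

(* E_{e,e'}: -1 if e' immediately follows e in a common face (a,b,c)
   with edges {a,b},{b,c},{c,a} in positive cyclic order, +1 if e'
   immediately precedes e, 0 otherwise. *)
Definition Emat (R : pzRingType) (V : finType) (face : V -> V -> V -> bool)
    (e e' : {set V}) : R :=
  if [exists t : V * V * V, [&& face t.1.1 t.1.2 t.2, e == [set t.1.1; t.1.2]
                                 & e' == [set t.1.2; t.2]]] then -1
  else if [exists t : V * V * V, [&& face t.1.1 t.1.2 t.2, e == [set t.1.1; t.1.2]
                                 & e' == [set t.2; t.1.1]]] then 1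
  else 0.
Arguments Emat {R V} face e e'.

Local Open Scope complex_scope.

(* principal argument in (-pi, pi] *)
Definition Arg (R : realType) (w : R[i]) : R :=
  if (complex.Im w < 0)%R then - acos ((complex.Re w : R) / (ComplexField.Normc.normc w : R))%R else acos ((complex.Re w : R) / (ComplexField.Normc.normc w : R))%R.

Definition no_degenerate_face (R : realType) (V : finType) (face : V -> V -> V -> bool)
    (z : V -> R[i]) : Prop :=
  forall a b c, face a b c -> complex.Im ((z b - z a) * (z c - z a)^*) != 0.

Definition theta_ab (R : realType) (V : finType) (face : V -> V -> V -> bool)
    (z : V -> R[i]) (a b : V) : R :=
  let c := third face a b in let d := third face b a in
  pi - Arg ((z b - z c) / (z a - z c)) - Arg ((z a - z d) / (z b - z d)).

(* theta_e for an edge e = {a,b} (the formula is symmetric in a, b) *)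
Definition theta_e (R : realType) (V : finType) (face : V -> V -> V -> bool)
    (z : V -> R[i]) (e : {set V}) : R :=
  match [pick p : V * V | adj face p.1 p.2 && (e == [set p.1; p.2])] with
  | Some p => theta_ab face z p.1 p.2
  | None => 0
  end.

Definition Amat (R : realType) (V : finType) (z : V -> R[i]) (v : V) (e : {set V})
    : R[i] :=
  if v \in e then
    match [pick w in e :\ v] with Some w => (z v - z w)^-1 | None => 0 end
  else 0.

Definition zpert (R : realType) (V : finType) (z : V -> R[i]) (v : V) (h : R[i])
    : V -> R[i] :=
  fun u => if u == v then z u + h else z u.

Definition wirt_dz (R : realType) (dx dy : R) : R[i] := (dx%:C - 'i * dy%:C) / 2%:R.
Definition wirt_dzbar (R : realType) (dx dy : R) : R[i] := (dx%:C + 'i * dy%:C) / 2%:R.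

(* Main.v *)
Require Import Defs.
From HB Require Import structures.
From mathcomp Require Import all_boot all_order all_algebra.
From mathcomp Require Import all_classical all_reals all_analysis.
From mathcomp Require Import complex.
From mathcomp Require Import ring lra.
Import Order.TTheory GRing.Theory Num.Theory.
Local Open Scope ring_scope.
Local Open Scope complex_scope.

Module AnaM.
Import numFieldNormedType.Exports.
Local Open Scope ring_scope.
Local Open Scope classical_set_scope.

Section Ana.
Context {R : realType}.
Local Notation D f a := (is_derive (0:R) (1:R) f a).

Lemma derD {f g : R -> R} {a b} : D f a -> D g b ->
  D (fun t => f t + g t) (a + b).
Proof. move=> Hf Hg; exact: (is_deriveD Hf Hg). Qed.

Lemma derB {f g : R -> R} {a b} : D f a -> D g b ->
  D (fun t => f t - g t) (a - b).
Proof. move=> Hf Hg; exact: (is_deriveB Hf Hg). Qed.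

Lemma derN {f : R -> R} {a} : D f a ->
  D (fun t => - f t) (- a).
Proof. move=> Hf; exact: (is_deriveN Hf). Qed.

Lemma derM {f g : R -> R} {a b} : D f a -> D g b ->
  D (fun t => f t * g t) (f 0 * b + g 0 * a).
Proof. move=> Hf Hg; exact: (is_deriveM Hf Hg). Qed.

Lemma derC (c : R) : D (fun _ => c) 0.
Proof. exact: is_derive_cst. Qed.

Lemma derI : D (fun t => t) 1.
Proof. exact: is_derive_id. Qed.

Lemma derE {f : R -> R} {a} b : D f a -> a = b -> D f b.
Proof. by move=> H <-. Qed.

Lemma der_cont {f : R -> R} {a} : D f a -> {for (0:R), continuous f}.
Proof.
case=> Hd _; apply: differentiable_continuous; exact/derivable1_diffP.
Qed.

End Ana.
Section Ana2.
Context {R : realType}.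
Local Notation D f a := (is_derive (0:R) (1:R) f a).

Lemma der_acos_part (x y : R -> R) dx dy : D x dx -> D y dy -> y 0 != 0 ->
  D (fun t => acos (x t / Num.sqrt (x t ^+ 2 + y t ^+ 2)))
    (Num.sg (y 0) * ((x 0 * dy - dx * y 0) / (x 0 ^+ 2 + y 0 ^+ 2))).
Proof.
move=> Hx Hy y0n.
have -> : (fun t => acos (x t / Num.sqrt (x t ^+ 2 + y t ^+ 2))) =
   (fun t => acos (x t / Num.sqrt (x t * x t + y t * y t))).
  by apply: funext => t; rewrite !expr2.
rewrite !expr2.
set x0 := x 0; set y0 := y 0.
have s0pos : 0 < x0 * x0 + y0 * y0.
  have y2 : 0 < y0 ^+ 2 by rewrite exprn_even_gt0 //= y0n orbT.
  by rewrite -!expr2; apply: ltr_wpDl; [exact: sqr_ge0 | exact: y2].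
have Hs := derD (derM Hx Hx) (derM Hy Hy).
have Hq := is_derive1_comp (g := fun t => x t * x t + y t * y t) (is_derive1_sqrt s0pos) Hs.
set S := Num.sqrt (x0 * x0 + y0 * y0).
have Spos : 0 < S by rewrite sqrtr_gt0.
have Hi := is_deriveV (f := Num.sqrt \o (fun t => x t * x t + y t * y t)) (lt0r_neq0 Spos) Hq.
have Hm := derM Hx Hi.
rewrite /= -/S in Hm.
have Hb : -1 < x0 * S^-1 < 1.
  have : `|x0| < S.
    rewrite -sqrtr_sqr /S ltr_sqrt // expr2 ltrDl.
    by rewrite -expr2 exprn_even_gt0 //= y0n orbT.
  rewrite ltr_norml => /andP[h1 h2].
  by rewrite ltr_pdivrMr // ltr_pdivlMr // mul1r mulN1r h1 h2.
have Ha := is_derive1_comp (g := fun t => x t * ((Num.sqrt \o (fun t => x t * x t + y t * y t)) t)^-1) (is_derive1_acos Hb) Hm.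
apply: derE Ha _.
rewrite -/x0 -/y0.
have sc : forall a b : R, a *: b = a * b by [].
rewrite sc.
have HS2 : S ^+ 2 = x0 * x0 + y0 * y0 by rewrite sqr_sqrtr // ltW.
have Sn0 : S != 0 by rewrite gt_eqF.
have Hsq : Num.sqrt (1 - (x0 / S) ^+ 2) = `|y0| / S.
  have -> : 1 - (x0 / S) ^+ 2 = (y0 / S) ^+ 2.
    rewrite !expr_div_n; apply: (mulIf (expf_neq0 2 Sn0)).
    rewrite mulrBl mul1r !divfK ?expf_neq0 // HS2 !expr2; ring.
  by rewrite sqrtr_sqr normrM normfV (gtr0_norm Spos).
rewrite Hsq -HS2.
have E : x0 * (- S ^- 2 * ((2 * S)^-1 * (x0 * dx + x0 * dx + (y0 * dy + y0 * dy)))) +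
   S^-1 * dx = ((S ^+ 2 - x0 * x0) * dx - x0 * y0 * dy) / S ^+ 3.
  by field.
have E2 : S ^+ 2 - x0 * x0 = y0 * y0 by rewrite HS2; ring.
rewrite E E2.
case: (ltrgt0P y0) => hy.
- rewrite ?gtr0_sg // ?gtr0_norm //; field. by rewrite gt_eqF.
- rewrite ?ltr0_sg // ?ltr0_norm //; field. by rewrite Sn0 lt_eqF.
- by move: y0n; rewrite -/y0 -hy eqxx.
Qed.
End Ana2.

Section Ana3.
Context {R : realType}.
Local Notation D f a := (is_derive (0:R) (1:R) f a).
Lemma der_near {f g : R -> R} {a} : (\forall t \near (0:R), f t = g t) -> D f a -> D g a.
Proof. by move=> H1 H2; apply: (near_eq_is_derive H1 H2). Qed.
Local Open Scope complex_scope.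

Lemma normcE' (u : R[i]) : ComplexField.Normc.normc u = Num.sqrt (complex.Re u ^+ 2 + complex.Im u ^+ 2).
Proof. by case: u. Qed.

Lemma der_Arg {w : R -> R[i]} {dx dy} : D (fun t => complex.Re (w t)) dx -> D (fun t => complex.Im (w t)) dy ->
  complex.Im (w 0) != 0 ->
  D (fun t => Arg (w t)) ((complex.Re (w 0) * dy - dx * complex.Im (w 0)) / (complex.Re (w 0) ^+ 2 + complex.Im (w 0) ^+ 2)).
Proof.
move=> Hx Hy y0n.
have Hac := (@der_acos_part R _ _ _ _ Hx Hy y0n).
have Hc := der_cont Hy.
case: (ltrgt0P (complex.Im (w 0))) => hy.
- have Hn := (@cvgr_gt R _ _ _ _ _ Hc _ hy).
  have Hd := derE ((complex.Re (w 0) * dy - dx * complex.Im (w 0)) /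
      (complex.Re (w 0) ^+ 2 + complex.Im (w 0) ^+ 2)) Hac.
  rewrite gtr0_sg // mul1r in Hd; have {}Hd := Hd erefl.
  apply: (der_near _ Hd).
  near=> t; have ht : (0 < complex.Im (w t))%R by near: t; exact: Hn.
  by rewrite /Arg ltNge (ltW ht) /= normcE'.
- have Hn : \forall t \near (0:R), (complex.Im (w t) < 0)%R by exact: (@cvgr_lt R _ _ _ _ _ Hc _ hy).
  have Hd := derE ((complex.Re (w 0) * dy - dx * complex.Im (w 0)) /
      (complex.Re (w 0) ^+ 2 + complex.Im (w 0) ^+ 2)) (derN Hac).
  rewrite ltr0_sg // mulN1r opprK in Hd; have {}Hd := Hd erefl.
  apply: (der_near _ Hd).
  near=> t; have ht : (complex.Im (w t) < 0)%R by near: t; exact: Hn.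
  by rewrite /Arg ht /= normcE'.
- by move: y0n; rewrite hy eqxx.
Unshelve. all: by end_near.
Qed.
End Ana3.

Section Cder.
Context {R : realType}.
Local Notation D f a := (is_derive (0:R) (1:R) f a).
Local Open Scope complex_scope.

Lemma conjE (a b : R) : (a +i* b)^* = a +i* (- b).
Proof. reflexivity. Qed.

Lemma conjcN (u : R[i]) : conjc u = Num.conj u.
Proof. by case: u. Qed.

Lemma sq_neq0 (a b : R) : a +i* b != 0 -> a ^+ 2 + b ^+ 2 != 0.
Proof.
move=> Mn0.
case: (eqVneq a 0) => [a0|an0].
  have bn0 : b != 0 by apply: contraNneq Mn0 => b0; rewrite a0 b0.
  by rewrite a0 expr0n /= add0r expf_neq0.
have h1 : 0 < a ^+ 2 by rewrite exprn_even_gt0 //= ?an0 ?orbT.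
have h2 := sqr_ge0 b; rewrite gt_eqF //; lra.
Qed.

Lemma invcE (a b : R) : (a +i* b)^-1 = (a / (a^+2 + b^+2)) +i* (- b / (a^+2 + b^+2)).
Proof. by rewrite /GRing.inv /= mulNr. Qed.

Definition cder (g : R -> R[i]) (dg : R[i]) :=
  D (fun t => complex.Re (g t)) (complex.Re dg) /\ D (fun t => complex.Im (g t)) (complex.Im dg).

Lemma cder_lin (c k : R[i]) : cder (fun t => c + t%:C * k) k.
Proof.
case: c k => c1 c2 [k1 k2]; split.
- have -> : (fun t => complex.Re ((c1 +i* c2) + t%:C * (k1 +i* k2))) = (fun t => c1 + t * k1).
    by apply: funext => t; rewrite /=; ring.
  by apply: derE (derD (derC _) (derM derI (derC _))) _ => /=; ring.
- have -> : (fun t => complex.Im ((c1 +i* c2) + t%:C * (k1 +i* k2))) = (fun t => c2 + t * k2).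
    by apply: funext => t; rewrite /=; ring.
  by apply: derE (derD (derC _) (derM derI (derC _))) _ => /=; ring.
Qed.

Lemma cder_conj {g dg} : cder g dg -> cder (fun t => (g t)^*) dg^*.
Proof.
case=> H1 H2; split.
- have -> : (fun t => complex.Re ((g t)^*)) = (fun t => complex.Re (g t)).
    by apply: funext => t; case: (g t).
  by case: dg H2 H1.
- have -> : (fun t => complex.Im ((g t)^*)) = (fun t => - complex.Im (g t)).
    by apply: funext => t; case: (g t).
  by case: dg H1 H2 => a b _ H2; apply: derN.
Qed.

Lemma cder_mul {f df g dg} : cder f df -> cder g dg ->
  cder (fun t => f t * g t) (f 0 * dg + df * g 0).
Proof.
case=> F1 F2 [G1 G2]; split.
- have -> : (fun t => complex.Re (f t * g t)) =
     (fun t => complex.Re (f t) * complex.Re (g t) - complex.Im (f t) * complex.Im (g t)).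
    by apply: funext => t; case: (f t) => ? ?; case: (g t).
  apply: derE (derB (derM F1 G1) (derM F2 G2)) _.
  by move: (f 0) (g 0) => [? ?] [? ?]; case: df dg {F1 F2 G1 G2} => ? ? [? ?] /=; ring.
- have -> : (fun t => complex.Im (f t * g t)) =
     (fun t => complex.Re (f t) * complex.Im (g t) + complex.Im (f t) * complex.Re (g t)).
    by apply: funext => t; case: (f t) => ? ?; case: (g t).
  apply: derE (derD (derM F1 G2) (derM F2 G1)) _.
  by move: (f 0) (g 0) => [? ?] [? ?]; case: df dg {F1 F2 G1 G2} => ? ? [? ?] /=; ring.
Qed.

Lemma Arg_scale (w : R[i]) (r : R) : 0 < r -> Arg (w * r%:C) = Arg w.
Proof.
case: w => a b r0; rewrite /Arg /= !mulr0 !subr0 !add0r.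
rewrite (pmulr_llt0 _ r0).
have -> : (a * r) ^+ 2 + (b * r) ^+ 2 = (a ^+ 2 + b ^+ 2) * r ^+ 2 by ring.
rewrite sqrtrM ?addr_ge0 ?sqr_ge0 // sqrtr_sqr (gtr0_norm r0).
by rewrite invfM mulrACA divff ?gt_eqF // mulr1.
Qed.

Lemma Arg_div (N M : R[i]) : Arg (N / M) = Arg (N * M^*).
Proof.
have [->|Mn0] := eqVneq M 0; first by rewrite invr0 conjC0 !mulr0.
have pos : 0 < complex.Re M ^+ 2 + complex.Im M ^+ 2.
  case: M Mn0 => a b /= Mn0.
  case: (eqVneq a 0) => [a0|an0].
    have bn0 : b != 0 by apply: contraNneq Mn0 => b0; rewrite a0 b0.
    by rewrite a0 expr0n /= add0r exprn_even_gt0 //= ?bn0 ?orbT.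
  have h1 : 0 < a ^+ 2 by rewrite exprn_even_gt0 //= ?an0 ?orbT.
  have h2 := sqr_ge0 b; lra.
have ipos : 0 < (complex.Re M ^+ 2 + complex.Im M ^+ 2)^-1 by rewrite invr_gt0.
rewrite -(Arg_scale (N * M^*) _ ipos).
congr Arg.
case: M Mn0 pos ipos => a b _ pos _ /=.
case: N => n1 n2; rewrite invcE. set u := Num.conj _. have -> : u = a +i* (- b) by [].
have pn : a ^+ 2 + b ^+ 2 != 0 by rewrite gt_eqF.
apply/eqP; rewrite eq_complex /=; apply/andP; split; apply/eqP; field=> //.
Qed.

Lemma der_arg_quot (N0 M0 k : R[i]) (p q : R) : M0 != 0 -> complex.Im (N0 * M0^*) != 0 ->
  D (fun t => Arg ((N0 + p%:C * (t%:C * k)) / (M0 + q%:C * (t%:C * k))))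
    (complex.Im (k * (p%:C / N0 - q%:C / M0))).
Proof.
move=> Mn0 Imn0.
have -> : (fun t => Arg ((N0 + p%:C * (t%:C * k)) / (M0 + q%:C * (t%:C * k)))) =
    (fun t => Arg ((N0 + t%:C * (p%:C * k)) * (M0 + t%:C * (q%:C * k))^*)).
  by apply: funext => t; rewrite Arg_div !(mulrCA p%:C) !(mulrCA q%:C).
have [H1 H2] := cder_mul (cder_lin N0 (p%:C * k)) (cder_conj (cder_lin M0 (q%:C * k))).
have z0 : (0:R)%:C = 0 by [].
rewrite z0 !mul0r !addr0 in H1 H2.
apply: (derE _ (der_Arg H1 H2 _)).
  by rewrite z0 !mul0r !addr0 conjcN.
clear H1 H2.
have Nn0 : N0 != 0 by apply: contraNneq Imn0 => ->; rewrite mul0r.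
rewrite -conjcN in Imn0.
move: Mn0 Nn0 Imn0.
case: N0 => n1 n2; case: M0 => m1 m2; case: k => k1 k2.
rewrite !invcE.
rewrite /= => /sq_neq0 hm /sq_neq0 hn _.
rewrite !(mul0r, subr0, addr0, mulr0, add0r, sub0r, oppr0).
field; rewrite hn hm /=.
set X := (_ + _); have -> : X = (n1 ^+ 2 + n2 ^+ 2) * (m1 ^+ 2 + m2 ^+ 2) by rewrite /X; ring.
by rewrite mulf_neq0.
Qed.
End Cder.

End AnaM.
Import AnaM.

Section Comb.
Context {V : finType}.

Lemma set2_eq {x y u w : V} : [set x; y] = [set u; w] -> x != y ->
  (x = u /\ y = w) \/ (x = w /\ y = u).
Proof.
move=> E xy.
have hx : x \in [set u; w] by rewrite -E !inE eqxx.
have hy : y \in [set u; w] by rewrite -E !inE eqxx orbT.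
move: hx hy; rewrite !inE => /orP[]/eqP hx /orP[]/eqP hy.
- by move: xy; rewrite hx hy eqxx.
- by left.
- by right.
- by move: xy; rewrite hx hy eqxx.
Qed.

Lemma set2_neq {x y u w : V} : x \notin [set u; w] -> [set x; y] != [set u; w].
Proof.
move=> hx; apply/negP => /eqP E; move: hx.
by rewrite -E !inE eqxx.
Qed.

Lemma edge_of {face : V -> V -> V -> bool} {x y w : V} : face x y w -> is_edge face [set x; y].
Proof.
move=> F; apply/existsP; exists (x, y); rewrite /= eqxx andbT.
by apply/existsP; exists w.
Qed.

End Comb.

Section Tri.
Context {V : finType} (face : V -> V -> V -> bool).
Context (Hrot : forall a b c, face a b c -> face b c a)
        (Huniq : forall a b c c', face a b c -> face a b c' -> c = c').
Context (a b c d : V) (Fabc : face a b c) (Fbad : face b a d).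
Context (ab : a != b) (ac : a != c) (bc : b != c) (ad : a != d) (bd : b != d) (cd : c != d).

Let T1 e' := [exists t : V * V * V, [&& face t.1.1 t.1.2 t.2, e' == [set t.1.1; t.1.2]
                                 & [set a; b] == [set t.1.2; t.2]]].
Let T2 e' := [exists t : V * V * V, [&& face t.1.1 t.1.2 t.2, e' == [set t.1.1; t.1.2]
                                 & [set a; b] == [set t.2; t.1.1]]].

Lemma T1_class e' : T1 e' -> e' = [set c; a] \/ e' = [set d; b].
Proof.
case/existsP => [[[t1 t2] t3]] /= /and3P[F /eqP -> /eqP E].
case: (set2_eq E ab) => [[ea eb]|[ea eb]]; subst t2 t3 || subst t1 t3.
- by left; rewrite (Huniq _ _ _ _ Fabc (Hrot _ _ _ F)).
- by right; rewrite (Huniq _ _ _ _ Fbad (Hrot _ _ _ F)).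
Qed.

Lemma T2_class e' : T2 e' -> e' = [set b; c] \/ e' = [set a; d].
Proof.
case/existsP => [[[t1 t2] t3]] /= /and3P[F /eqP -> /eqP E].
case: (set2_eq E ab) => [[ea eb]|[ea eb]]; subst t2 t3 || subst t1 t3.
- by left; rewrite (Huniq _ _ _ _ Fabc (Hrot _ _ _ (Hrot _ _ _ F))).
- by right; rewrite (Huniq _ _ _ _ Fbad (Hrot _ _ _ (Hrot _ _ _ F))).
Qed.

Lemma Emat_eq (R : pzRingType) e' : Emat (R:=R) face e' [set a; b] =
  if T1 e' then -1 else if T2 e' then 1 else 0.
Proof. by []. Qed.

Let ba : b != a. Proof. by rewrite eq_sym. Qed.
Let ca : c != a. Proof. by rewrite eq_sym. Qed.
Let cb : c != b. Proof. by rewrite eq_sym. Qed.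
Let da : d != a. Proof. by rewrite eq_sym. Qed.
Let db : d != b. Proof. by rewrite eq_sym. Qed.
Let dc : d != c. Proof. by rewrite eq_sym. Qed.

Lemma set2C (x y : V) : [set x; y] = [set y; x].
Proof. by apply/setP => z; rewrite !inE orbC. Qed.

Lemma n_bc_ca : [set b; c] != [set c; a].
Proof. by apply: set2_neq; rewrite !inE negb_or; apply/andP; split. Qed.
Lemma n_bc_ad : [set b; c] != [set a; d].
Proof. by apply: set2_neq; rewrite !inE negb_or; apply/andP; split. Qed.
Lemma n_bc_db : [set b; c] != [set d; b].
Proof. by rewrite set2C; apply: set2_neq; rewrite !inE negb_or; apply/andP; split. Qed.
Lemma n_ca_ad : [set c; a] != [set a; d].
Proof. by apply: set2_neq; rewrite !inE negb_or; apply/andP; split. Qed.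
Lemma n_ca_db : [set c; a] != [set d; b].
Proof. by rewrite set2C; apply: set2_neq; rewrite !inE negb_or; apply/andP; split. Qed.
Lemma n_ad_db : [set a; d] != [set d; b].
Proof. by apply: set2_neq; rewrite !inE negb_or; apply/andP; split. Qed.

Lemma T1_ca : T1 [set c; a].
Proof. by apply/existsP; exists (c, a, b); rewrite /= !eqxx (Hrot _ _ _ (Hrot _ _ _ Fabc)). Qed.
Lemma T1_db : T1 [set d; b].
Proof. by apply/existsP; exists (d, b, a); rewrite /= !eqxx (Hrot _ _ _ (Hrot _ _ _ Fbad)) set2C eqxx. Qed.
Lemma T2_bc : T2 [set b; c].
Proof. by apply/existsP; exists (b, c, a); rewrite /= !eqxx (Hrot _ _ _ Fabc). Qed.
Lemma T2_ad : T2 [set a; d].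
Proof. by apply/existsP; exists (a, d, b); rewrite /= !eqxx (Hrot _ _ _ Fbad) set2C eqxx. Qed.

Lemma nT1_bc : T1 [set b; c] = false.
Proof.
apply/negbTE/negP => H; case: (T1_class _ H) => /eqP; first by rewrite (negbTE n_bc_ca).
by rewrite (negbTE n_bc_db).
Qed.
Lemma nT1_ad : T1 [set a; d] = false.
Proof.
apply/negbTE/negP => H; case: (T1_class _ H) => /eqP; first by rewrite eq_sym (negbTE n_ca_ad).
by rewrite (negbTE n_ad_db).
Qed.

Lemma E_bc (R : pzRingType) : Emat (R:=R) face [set b; c] [set a; b] = 1.
Proof. by rewrite Emat_eq nT1_bc T2_bc. Qed.
Lemma E_ad (R : pzRingType) : Emat (R:=R) face [set a; d] [set a; b] = 1.
Proof. by rewrite Emat_eq nT1_ad T2_ad. Qed.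
Lemma E_ca (R : pzRingType) : Emat (R:=R) face [set c; a] [set a; b] = -1.
Proof. by rewrite Emat_eq T1_ca. Qed.
Lemma E_db (R : pzRingType) : Emat (R:=R) face [set d; b] [set a; b] = -1.
Proof. by rewrite Emat_eq T1_db. Qed.
Lemma E_other (R : pzRingType) e' : e' != [set b; c] -> e' != [set c; a] ->
  e' != [set a; d] -> e' != [set d; b] -> Emat (R:=R) face e' [set a; b] = 0.
Proof.
move=> n1 n2 n3 n4; rewrite Emat_eq.
have -> : T1 e' = false by apply/negbTE/negP => H; case: (T1_class _ H) => /eqP; [move: n2 | move: n4] => /negbTE ->.
have -> : T2 e' = false by apply/negbTE/negP => H; case: (T2_class _ H) => /eqP; [move: n1 | move: n3] => /negbTE ->.
by [].
Qed.

Lemma sum_eq (R : realType) (z : V -> R[i]) v :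
  \sum_(e' : {set V} | is_edge face e') Amat z v e' * Emat face e' [set a; b]
   = Amat z v [set b; c] - Amat z v [set c; a] + Amat z v [set a; d] - Amat z v [set d; b].
Proof.
have e1 : is_edge face [set b; c] := edge_of (Hrot _ _ _ Fabc).
have e2 : is_edge face [set c; a] := edge_of (Hrot _ _ _ (Hrot _ _ _ Fabc)).
have e3 : is_edge face [set a; d] := edge_of (Hrot _ _ _ Fbad).
have e4 : is_edge face [set d; b] := edge_of (Hrot _ _ _ (Hrot _ _ _ Fbad)).
have n12 := n_bc_ca; have n13 := n_bc_ad; have n14 := n_bc_db.
have n23 := n_ca_ad; have n24 := n_ca_db; have n34 := n_ad_db.
rewrite (bigD1 [set b; c]) //=.
rewrite (bigD1 [set c; a]) /=; last by rewrite e2 eq_sym n12.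
rewrite (bigD1 [set a; d]) /=; last by rewrite e3 eq_sym n13 eq_sym n23.
rewrite (bigD1 [set d; b]) /=; last by rewrite e4 eq_sym n14 eq_sym n24 eq_sym n34.
rewrite big1 ?addr0; last first.
  move=> e' /andP[/andP[/andP[/andP[_ m1] m2] m3] m4].
  by rewrite E_other // mulr0.
rewrite E_bc E_ca E_ad E_db; ring.
Qed.

End Tri.

Definition dl {R : realType} {V : finType} (v u : V) : R := if u == v then 1 else 0.

Section Am.
Context {R : realType} {V : finType} (z : V -> R[i]) (v : V).

Lemma Amat2 x y : x != y -> Amat z v [set x; y] = (dl v x - dl v y : R)%:C / (z x - z y).
Proof.
move=> xy; have yx : y != x by rewrite eq_sym.
rewrite /Amat /dl.
have one : (1 : R)%:C = 1 by [].
have zer : (0 : R)%:C = 0 by [].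
case: (eqVneq x v) => [ex|xv].
  subst x; rewrite (negbTE yx) setU11.
  case: pickP => [w|H0].
    rewrite !inE => /andP[wx /orP[/eqP wx'|/eqP ->]]; first by rewrite wx' eqxx in wx.
    by rewrite subr0 one mul1r.
  by have := H0 y; rewrite !inE eqxx orbT andbT yx.
case: (eqVneq y v) => [ey|yv].
  subst y; rewrite !inE eqxx orbT.
  case: pickP => [w|H0].
    rewrite !inE => /andP[wy /orP[/eqP ->|/eqP wy']]; last by rewrite wy' eqxx in wy.
    have m1 : ((0:R) - 1)%:C = -1 by rewrite sub0r rmorphN rmorph1.
    by rewrite m1 mulN1r -invrN opprB.
  by have := H0 x; rewrite !inE eqxx xy.
have -> : (v \in [set x; y]) = false.
  by rewrite !inE; apply/negbTE; rewrite negb_or eq_sym xv eq_sym yv.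
by rewrite subrr zer mul0r.
Qed.
End Am.

Section Final.
Context {R : realType}.

Lemma wirt_alg (L1 L2 : R[i]) :
  wirt_dz (0 - complex.Im (1 * L1) - complex.Im (1 * L2))
          (0 - complex.Im ('i * L1) - complex.Im ('i * L2)) = 'i / 2%:R * (L1 + L2) /\
  wirt_dzbar (0 - complex.Im (1 * L1) - complex.Im (1 * L2))
          (0 - complex.Im ('i * L1) - complex.Im ('i * L2)) = - ('i / 2%:R) * (L1 + L2)^*.
Proof.
rewrite /wirt_dz /wirt_dzbar; split.
- set X := (_ - _ * _); have -> : X = 'i * (L1 + L2).
    rewrite /X; clear X; case: L1 L2 => a b [c d].
    by apply/eqP; rewrite eq_complex /=; apply/andP; split; apply/eqP; ring.
  by ring.
- set X := (_ + _ * _); have -> : X = - 'i * (L1 + L2)^*.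
    rewrite /X; clear X; case: L1 L2 => a b [c d].
    by apply/eqP; rewrite eq_complex /=; apply/andP; split; apply/eqP; ring.
  by ring.
Qed.

Lemma zpertB {V : finType} (z : V -> R[i]) v x y h :
  zpert z v h x - zpert z v h y = (z x - z y) + (dl v x - dl v y : R)%:C * h.
Proof.
have one : (1 : R)%:C = 1 by [].
have zer : (0 : R)%:C = 0 by [].
rewrite /zpert /dl rmorphB; case: (x == v); case: (y == v); rewrite ?one ?zer; ring.
Qed.

Lemma ImJ (u w : R[i]) : complex.Im (u * w^*) = - complex.Im (w * u^*).
Proof. by case: u w => a b [c d] /=; ring. Qed.

End Final.

Theorem proposition3 (R : realType) (V : finType) (face : V -> V -> V -> bool)
    (z : V -> R[i]) :
  sphere_triangulation face -> injective z -> no_degenerate_face face z ->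
  forall (v : V) (e : {set V}), is_edge face e ->
  exists dx dy : R,
    [/\ is_derive (0 : R) (1 : R) (fun t : R => theta_e face (zpert z v t%:C) e) dx,
        is_derive (0 : R) (1 : R) (fun t : R => theta_e face (zpert z v (t *i)) e) dy,
        wirt_dz dx dy = 'i / 2%:R * \sum_(e' : {set V} | is_edge face e')
                                      Amat z v e' * Emat face e' e
      & wirt_dzbar dx dy = - ('i / 2%:R) * \sum_(e' : {set V} | is_edge face e')
                                      (Amat z v e')^* * Emat face e' e ].
Proof.
move=> [Hnd [Hrot [Hasym [Huniq [Hadjs _]]]]] zinj nodeg v e He.
have [p Hp Hth] : exists2 p : V * V,
    adj face p.1 p.2 && (e == [set p.1; p.2]) &
    forall z' : V -> R[i], theta_e face z' e = theta_ab face z' p.1 p.2.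
  rewrite /theta_e; case: (pickP (fun p : V * V => adj face p.1 p.2 && (e == [set p.1; p.2]))) => [p Hp | H0]; first by exists p.
  by exfalso; move/existsP: He => [p Hp]; rewrite H0 in Hp.
case/andP: Hp => Hadj /eqP He'.
case: p Hadj He' Hth => a b /= Hadj He' Hth.
set c := third face a b; set d := third face b a.
have Fabc : face a b c.
  rewrite /c /third; case: pickP => [w //|H0].
  by move/existsP: Hadj => [w Hw]; rewrite H0 in Hw.
have Fbad : face b a d.
  rewrite /d /third; case: pickP => [w //|H0].
  by move/existsP: (Hadjs _ _ Hadj) => [w Hw]; rewrite H0 in Hw.
have /and3P[ab bc ac] := Hnd _ _ _ Fabc.
have /and3P[_ ad bd] := Hnd _ _ _ Fbad.
have cd : c != d.
  by apply/negP => /eqP cd; move: (Hasym _ _ _ Fabc); rewrite cd Fbad.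
have zne : forall x y, x != y -> z x - z y != 0.
  by move=> x y xy; rewrite subr_eq0; apply: contra xy => /eqP /zinj ->.
set N1 := z b - z c; set D1 := z a - z c.
set N2 := z a - z d; set D2 := z b - z d.
set p1 : R := dl v b - dl v c; set q1 : R := dl v a - dl v c.
set p2 : R := dl v a - dl v d; set q2 : R := dl v b - dl v d.
set L1 := p1%:C / N1 - q1%:C / D1; set L2 := p2%:C / N2 - q2%:C / D2.
have D1n0 : D1 != 0 by apply: zne.
have D2n0 : D2 != 0 by apply: zne.
have Im1 : complex.Im (N1 * D1^*) != 0.
  rewrite ImJ oppr_eq0; exact: (nodeg _ _ _ (Hrot _ _ _ (Hrot _ _ _ Fabc))).
have Im2 : complex.Im (N2 * D2^*) != 0.
  rewrite ImJ oppr_eq0; exact: (nodeg _ _ _ (Hrot _ _ _ (Hrot _ _ _ Fbad))).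
have Hf : forall k : R[i], (fun t : R => theta_e face (zpert z v (t%:C * k)) e) =
   (fun t : R => pi - Arg ((N1 + p1%:C * (t%:C * k)) / (D1 + q1%:C * (t%:C * k)))
                    - Arg ((N2 + p2%:C * (t%:C * k)) / (D2 + q2%:C * (t%:C * k)))).
  by move=> k; apply: funext => t; rewrite Hth /theta_ab -/c -/d !zpertB.
have Hd : forall k : R[i], is_derive (0:R) (1:R)
    (fun t : R => theta_e face (zpert z v (t%:C * k)) e)
    (0 - complex.Im (k * L1) - complex.Im (k * L2)).
  move=> k; rewrite Hf.
  exact: (derB (derB (derC _) (der_arg_quot _ _ k _ _ D1n0 Im1)) (der_arg_quot _ _ k _ _ D2n0 Im2)).
have HS : \sum_(e' : {set V} | is_edge face e') Amat z v e' * Emat face e' e = L1 + L2.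
  rewrite He' (sum_eq face Hrot Huniq a b c d Fabc Fbad ab ac bc ad bd cd R z v).
  have ca : c != a by rewrite eq_sym.
  have db : d != b by rewrite eq_sym.
  rewrite !Amat2 //.
  have flip : forall (x y : R) (u w : R[i]), (x - y)%:C / (u - w) = (y - x)%:C / (w - u).
    by move=> x y u w; rewrite -opprB rmorphN -(opprB w) invrN mulrNN.
  rewrite (flip (dl v c)) (flip (dl v d)) /L1 /L2 /p1 /q1 /p2 /q2 /N1 /D1 /N2 /D2.
  by rewrite [RHS]addrA.
have HSc : \sum_(e' : {set V} | is_edge face e') (Amat z v e')^* * Emat face e' e = (L1 + L2)^*.
  rewrite -HS rmorph_sum; apply: eq_bigr => e' _.
  rewrite rmorphM; congr (_ * _).
  rewrite /Emat; case: ifP => _; first by rewrite rmorphN1.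
  by case: ifP => _; rewrite ?rmorph1 ?rmorph0.
have [W1 W2] := wirt_alg L1 L2.
exists (0 - complex.Im (1 * L1) - complex.Im (1 * L2)),
       (0 - complex.Im ('i * L1) - complex.Im ('i * L2)).
split.
- have := Hd 1.
  have -> : (fun t : R => theta_e face (zpert z v (t%:C * 1)) e) =
            (fun t : R => theta_e face (zpert z v t%:C) e).
    by apply: funext => t; rewrite mulr1.
  by [].
- have := Hd 'i.
  have -> : (fun t : R => theta_e face (zpert z v (t%:C * 'i)) e) =
            (fun t : R => theta_e face (zpert z v (t *i)) e).
    apply: funext => t; congr (theta_e _ (zpert _ _ _) _).
    by apply/eqP; rewrite eq_complex /=; apply/andP; split; apply/eqP; ring.
  by [].
- by rewrite W1 HS.
- by rewrite W2 HSc.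
Qed.
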